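(* $\mathscr X$ is a compact subset of $C[0,1]$ with respect to the topology of uniform convergence.
   Context: The Faber--Schauder functions are $e_{0,0}(t):=(\min\{t,1-t\})^+$ and $e_{m,k}(t):=2^{-m/2}e_{0,0}(2^m t-k)$ for $t\in\mathbb R$, $m\ge1$, $k\in\mathbb Z$. $\mathscr X$ denotes the set of all functions $x\in C[0,1]$ of the form $x=\sum_{m=0}^\infty\sum_{k=0}^{2^m-1}\theta_{m,k}e_{m,k}$ (uniformly convergent series) with $\theta_{m,k}\in\{-1,+1\}$. *)

(* Defs.v *)
From HB Require Import structures.
From mathcomp Require Import all_boot all_order all_algebra.
From mathcomp Require Import all_classical all_reals all_analysis.
Set Implicit Arguments. Unset Strict Implicit. Unset Printing Implicit Defensive.
Import Order.TTheory GRing.Theory Num.Theory.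
Import numFieldNormedType.Exports.
Local Open Scope classical_set_scope.
Local Open Scope ring_scope.

Definition e00 {R : realType} (t : R) : R := Num.max (Num.min t (1 - t)) 0.

Definition fs {R : realType} (m k : nat) (t : R) : R :=
  (2 : R) `^ (- (m%:R / 2)) * e00 ((2 : R) ^+ m * t - k%:R).

Definition fs_partial {R : realType} (theta : nat -> nat -> R) (N : nat) (t : R) : R :=
  \sum_(m < N) \sum_(k < 2 ^ m) theta m k * fs m k t.

(* The set \mathscr X: functions x of the form sum_m sum_{k<2^m} theta_{m,k} e_{m,k}
   with theta in {-1,+1}, the series converging uniformly (here: on all of R,
   which determines x everywhere; all e_{m,k} with 0<=k<2^m vanish off [0,1]),
   and x continuous on [0,1]. *)
Definition FS_set {R : realType} : set (R -> R) :=
  [set x | exists theta : nat -> nat -> R,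
     (forall m k, theta m k = 1 \/ theta m k = -1) /\
     {uniform, fs_partial theta @ \oo --> x} /\
     {within `[0, 1], continuous x}].

(* Main.v *)
Require Import Defs.
From HB Require Import structures.
From mathcomp Require Import all_boot all_order all_algebra.
From mathcomp Require Import all_classical all_reals all_analysis.
From mathcomp Require Import ring lra.
Import Order.TTheory GRing.Theory Num.Theory.
Import numFieldNormedType.Exports.
Local Open Scope classical_set_scope.
Local Open Scope ring_scope.

Section S.
Variable R : realType.

Definition qq : R := 2 `^ (- 2^-1).

Lemma qq_gt0 : 0 < qq. Proof. exact: powR_gt0. Qed.
Lemma qq_lt1 : qq < 1.
Proof.
rewrite lt_neqAle; apply/andP; split.
  rewrite /qq powR_eq1; apply/negP => /or3P [].
  - by move/eqP => h; have : (2:R) = 1 := h; lra.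
  - move=> h; have : (2:R) < 0 := h; lra.
  - by rewrite oppr_eq0 invr_eq0 pnatr_eq0.
rewrite /qq -[leRHS](powRr0 2). apply: ler_powR; first lra.
  by rewrite oppr_le0 invr_ge0.
Qed.

Lemma fs_pow (m : nat) : (2 : R) `^ (- (m%:R / 2)) = qq ^+ m.
Proof.
rewrite /qq -powR_mulrn; last by rewrite ltW // powR_gt0.
by rewrite -powRrM; congr (_ `^ _); rewrite mulNr mulrC.
Qed.

Lemma e00_cases (t : R) : (t <= 0 /\ e00 t = 0) \/ (0 <= t /\ t <= 1 - t /\ e00 t = t)
   \/ (1 - t <= t /\ t <= 1 /\ e00 t = 1 - t) \/ (1 <= t /\ e00 t = 0).
Proof.
rewrite /e00; have [h1|h1] := boolP (t <= 1 - t).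
  rewrite (min_l h1); have [h2|h2] := boolP (t <= 0).
    by rewrite (max_r h2); left.
  have h2' : 0 <= t by rewrite ltW // ltNge.
  rewrite (max_l h2').
  right; left; split; [|split] => //; rewrite ltW // ltNge.
have h1' : 1 - t <= t by rewrite ltW // ltNge.
rewrite (min_r h1').
have [h2|h2] := boolP (1 - t <= 0).
  rewrite (max_r h2); right; right; right; split => //; lra.
have h2' : 0 <= 1 - t by rewrite ltW // ltNge.
rewrite (max_l h2').
right; right; left; split; [|split] => //; clear h1 h2; lra.
Qed.
Lemma e00_ge0 (t : R) : 0 <= e00 t.
Proof. move: (e00_cases t) => [[? ->]|[[? [? ->]]|[[? [? ->]]|[? ->]]]]; lra. Qed.
Lemma e00_le1 (t : R) : e00 t <= 1.
Proof. move: (e00_cases t) => [[? ->]|[[? [? ->]]|[[? [? ->]]|[? ->]]]]; lra. Qed.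
Lemma e00_out (t : R) : ~ (0 < t < 1) -> e00 t = 0.
Proof.
move=> H; have : ~~ ((0 < t) && (t < 1)) by apply/negP.
rewrite negb_and -!leNgt => /orP [h|h];
  move: (e00_cases t) => [[? ->]|[[? [? ->]]|[[? [? ->]]|[? ->]]]] //; lra.
Qed.

Definition lev (th : nat -> nat -> R) m t := \sum_(k < 2^m) th m k * fs m k t.

Lemma fs_eq m k (t : R) : fs m k t = qq^+m * e00 (2^+m * t - k%:R).
Proof. by rewrite /fs fs_pow. Qed.

Lemma nat_close (j k : nat) (u : R) : 0 < u - j%:R < 1 -> 0 < u - k%:R < 1 -> j = k.
Proof.
move=> /andP[h1 h2] /andP[h3 h4].
have a : (j < k.+1)%N by rewrite -(ltr_nat R) -natr1; set x := j%:R; set y := k%:R; lra.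
have b : (k < j.+1)%N by rewrite -(ltr_nat R) -natr1; set x := j%:R; set y := k%:R; lra.
by apply/anti_leq/andP; split; rewrite -ltnS.
Qed.


Lemma lev_bound th m t : (forall m k, `|th m k| <= 1) -> `|lev th m t| <= qq^+m.
Proof.
move=> hth; set u := 2^+m * t.
have hq : 0 <= qq ^+ m by rewrite exprn_ge0 // ltW // qq_gt0.
case: (pselect (exists k : 'I_(2^m), 0 < u - k%:R < 1)) => [[k0 hk0]|hno].
- rewrite /lev (bigD1 k0) //= big1 => [|j hj].
    rewrite addr0 fs_eq !normrM (ger0_norm (e00_ge0 _)) (ger0_norm hq).
    rewrite -[leRHS]mul1r; apply: (ler_pM (normr_ge0 _)); [by rewrite mulr_ge0 // e00_ge0|exact: hth|].
    rewrite -[leRHS]mulr1; apply: ler_wpM2l => //; exact: e00_le1.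
  rewrite fs_eq e00_out ?mulr0 //.
  move=> hj'; move/negP: hj; apply; apply/eqP.
  apply: val_inj; exact: (nat_close _ _ _ hj' hk0).
- rewrite /lev big1 ?normr0 //.
  move=> j _; rewrite fs_eq e00_out ?mulr0 //.
  by move=> h; apply: hno; exists j.
Qed.

Lemma geom_sum a b : (a <= b)%N -> \sum_(a <= m < b) qq^+m * (1 - qq) = qq^+a - qq^+b.
Proof.
elim: b => [|b IH] hab.
  by move: hab; rewrite leqn0 => /eqP ->; rewrite big_geq // subrr.
move: hab; rewrite leq_eqVlt => /orP [/eqP ->|hab].
  by rewrite big_geq // subrr.
rewrite big_nat_recr //= IH // exprS; ring.
Qed.

Lemma qq1_gt0 : 0 < 1 - qq. Proof. by rewrite subr_gt0 qq_lt1. Qed.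

Lemma tail_bound th a b t : (forall m k, `|th m k| <= 1) ->
  `|\sum_(a <= m < b) lev th m t| <= qq^+a / (1 - qq).
Proof.
move=> hth.
have hpos : 0 <= qq ^+ a / (1 - qq).
  by rewrite divr_ge0 // ?exprn_ge0 // ltW // ?qq_gt0 // qq1_gt0.
have [hab|hab] := leqP b a.
  by rewrite big_geq // normr0.
apply: le_trans (ler_norm_sum _ _ _) _.
apply: le_trans (_ : \sum_(a <= m < b) qq^+m <= _).
  by apply: ler_sum => m _; apply: lev_bound.
rewrite ler_pdivlMr; last exact: qq1_gt0.
rewrite mulr_suml geom_sum; last exact: ltnW.
rewrite lerBlDr lerDl; apply: exprn_ge0; exact: ltW qq_gt0.
Qed.

Lemma partial_diff th a b t : (a <= b)%N ->
  fs_partial th b t - fs_partial th a t = \sum_(a <= m < b) lev th m t.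
Proof.
move=> hab; rewrite /fs_partial -!(big_mkord xpredT (fun m => lev th m t)).
by rewrite (@big_cat_nat _ _ _ a 0 b) //= addrAC subrr add0r.
Qed.

Lemma g_small e : 0 < e -> \forall N \near \oo, qq^+N / (1 - qq) < e.
Proof.
move=> e0.
have hq : `|qq| < 1 by rewrite ger0_norm ?qq_lt1 // ltW // qq_gt0.
have h := cvg_expr hq.
have hp : 0 < e * (1 - qq) by rewrite mulr_gt0 ?qq1_gt0.
move/cvgrPdist_lt: h => /(_ _ hp); apply: filterS => N.
rewrite sub0r normrN ger0_norm ?exprn_ge0 ?ltW ?qq_gt0 //.
by rewrite ltr_pdivrMr ?qq1_gt0.
Qed.

Lemma pt_cvg (th : nat -> nat -> R) (t : R) : (forall m k, `|th m k| <= 1) ->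
  cvgn (fun N => fs_partial th N t).
Proof.
move=> hth.
have -> : (fun N => fs_partial th N t) = series (fun m => lev th m t).
  by apply: funext => N; rewrite /series /= big_mkord.
apply/cauchy_cvgP/cauchy_seriesP => e e0.
move: (g_small _ e0) => [N _ hN].
exists ([set n | (N <= n)%N], setT) => //=; first by split => //; exists N.
move=> [x y] [/= hx _].
exact: le_lt_trans (tail_bound _ _ _ _ hth) (hN _ hx).
Qed.

Definition Lim (th : nat -> nat -> R) (t : R) : R := limn (fun N => fs_partial th N t).

Lemma Lim_tail (th : nat -> nat -> R) N (t : R) : (forall m k, `|th m k| <= 1) ->
  `|Lim th t - fs_partial th N t| <= qq^+N / (1 - qq).
Proof.
move=> hth.
apply: (cvgr_to_le (F := \oo) (f := fun M => `|fs_partial th M t - fs_partial th N t|)).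
  by apply: cvg_norm; apply: cvgB; [exact: pt_cvg| exact: cvg_cst].
near=> M; rewrite partial_diff; first exact: tail_bound.
by near: M; exact: nbhs_infty_ge.
Unshelve. all: by end_near.
Qed.

Lemma Lim_unif (th : nat -> nat -> R) : (forall m k, `|th m k| <= 1) ->
  {uniform, fs_partial th @ \oo --> Lim th}.
Proof.
move=> hth P /uniform_nbhs [E [entE sub]].
move: entE; rewrite -entourage_ballE => -[e /= e0 he].
apply: filterS (g_small _ e0) => N hN; apply: sub => y _; apply: he => /=.
rewrite -ball_normE /=.
exact: le_lt_trans (Lim_tail _ _ _ hth) hN.
Qed.

Lemma e00_cont : continuous (@e00 R).
Proof.
move=> x.
have := @continuous_max R R (fun t : R => Num.min t (1 - t)) (fun=> 0) x.
apply; last exact: cst_continuous.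
have := @continuous_min R R id (fun t : R => 1 - t) x.
apply; first exact: cvg_id.
by apply: cvgB; [exact: cvg_cst|exact: cvg_id].
Qed.

Lemma fs_cont m k : continuous (@fs R m k).
Proof.
move=> x.
have := @continuousM R R (fun=> (2 : R) `^ (- (m%:R / 2))) (fun t => e00 ((2 : R) ^+ m * t - k%:R)) x.
apply; first exact: cst_continuous.
apply: (continuous_comp _ (e00_cont _)).
by apply: cvgB; [apply: cvgM; [exact: cvg_cst|exact: cvg_id]|exact: cvg_cst].
Qed.

Lemma sum_cont (F : nat -> R -> R) n : (forall i, continuous (F i)) ->
  continuous (fun t => \sum_(i < n) F i t).
Proof.
move=> hF; elim: n => [|n IH].
  have -> : (fun t : R => \sum_(i < 0) F i t) = fun=> 0.
    by apply: funext => t; rewrite big_ord0.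
  exact: cst_continuous.
have -> : (fun t : R => \sum_(i < n.+1) F i t) =
   (fun t => \sum_(i < n) F i t) + F n.
  by apply: funext => t; rewrite big_ord_recr.
by move=> x; apply: continuousD; [exact: IH|exact: hF].
Qed.

Lemma partial_cont (th : nat -> nat -> R) N : continuous (fs_partial th N).
Proof.
apply: (sum_cont (fun m t => \sum_(k < 2^m) th m k * fs m k t)) => m.
apply: (sum_cont (fun k t => th m k * fs m k t)) => k.
move=> x.
have := @continuousM R R (fun=> th m k) (fs m k) x.
by apply; [exact: cst_continuous|exact: fs_cont].
Qed.

Lemma Lim_cont (th : nat -> nat -> R) : (forall m k, `|th m k| <= 1) -> continuous (Lim th).
Proof.
move=> hth; apply: (uniform_limit_continuous _ _ (Lim_unif _ hth)).
have : \forall N \near \oo, continuous (fs_partial th N).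
  by apply: nearW => N; exact: partial_cont.
by [].
Qed.

Definition thb (b : cantor_space) m k : R := if b (2^m + k)%N then 1 else -1.
Lemma thb_bound b m k : `|thb b m k| <= 1.
Proof. by rewrite /thb; case: ifP; rewrite ?normrN normr1. Qed.

Definition Phi (b : cantor_space) : {uniform` `[(0:R), 1] -> R} := Lim (thb b).

Lemma near_coord (b : cantor_space) (i : nat) : \forall c \near b, c i = b i.
Proof.
have := @proj_continuous nat (fun _ => bool) i b.
by move=> /(_ [set b i] (discrete_set1 _)).
Qed.

Lemma Phi_cont : continuous Phi.
Proof.
move=> b P /uniform_nbhs [E [entE sub]].
move: entE; rewrite -entourage_ballE => -[e /= e0 he].
have e20 : 0 < e / 2 by rewrite divr_gt0.
move: (g_small _ e20) => [N _ hN]; have hNN := hN N (leqnn N).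
have near_b : \forall c \near b, forall i : 'I_(2^N), c (nat_of_ord i) = b (nat_of_ord i).
  apply: (@filter_forall cantor_space _ (fun (i : 'I_(2^N)) (c : cantor_space) => c (nat_of_ord i) = b (nat_of_ord i)) (nbhs b) _) => i.
  exact: near_coord.
apply: filterS near_b => c hc.
apply: sub => y _; apply: he => /=; rewrite -ball_normE /=.
have eqS : fs_partial (thb b) N y = fs_partial (thb c) N y.
  rewrite /fs_partial; apply: eq_bigr => m _; apply: eq_bigr => k _; congr (_ * _).
  have hlt : (2^m + k < 2^N)%N.
    have hm : (m < N)%N := ltn_ord m.
    apply: (@leq_trans (2^m + 2^m)); first by rewrite ltn_add2l ltn_ord.
    by rewrite addnn -mul2n -expnS leq_exp2l.
  by rewrite /thb (hc (Ordinal hlt)).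
have h1 := Lim_tail _ N y (thb_bound b).
have h2 := Lim_tail _ N y (thb_bound c).
rewrite eqS in h1.
have -> : Lim (thb b) y - Lim (thb c) y =
  (Lim (thb b) y - fs_partial (thb c) N y) - (Lim (thb c) y - fs_partial (thb c) N y) by ring.
apply: le_lt_trans (ler_normB _ _) _.
have -> : e = e / 2 + e / 2 by field.
by apply: ltr_leD; [exact: le_lt_trans h1 hNN|exact: le_trans h2 (ltW hNN)].
Qed.

Lemma unif_pt (F : nat -> R -> R) (x : R -> R) t :
  {uniform, F @ \oo --> x} -> (fun N => F N t) @ \oo --> x t.
Proof.
move=> hu; apply/cvgrPdist_lt => e e0.
have : nbhs (x : {uniform R -> R}) [set h | forall y, ball (x y) e (h y)].
  apply/uniform_nbhs; exists [set xy | ball xy.1 e xy.2]; split.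
    by rewrite -entourage_ballE; exists e.
  by move=> h hh y; apply: (hh y).
move=> hnb; have hh : \forall N \near \oo, forall y, ball (x y) e (F N y) := hu _ hnb.
near=> N.
suff : forall y, ball (x y) e (F N y) by move=> /(_ t); rewrite -ball_normE.
by near: N; exact: hh.
Unshelve. all: by end_near.
Qed.

Lemma FS_image : (FS_set : set {uniform` `[(0 : R), 1]%classic -> R}) = Phi @` setT.
Proof.
apply/seteqP; split => x.
- move=> [th [hpm [hx _]]].
  pose b : cantor_space := fun i => th (trunc_log 2 i) (i - 2^(trunc_log 2 i))%N == 1.
  exists b => //.
  have eqth : fs_partial th = fs_partial (thb b).
    apply: funext => N; apply: funext => t.
    rewrite /fs_partial; apply: eq_bigr => m _; apply: eq_bigr => k _; congr (_ * _).
    have hk : (k < 2^m)%N := ltn_ord k.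
    have hlog : trunc_log 2 (2^m + k) = m.
      apply: trunc_log_eq => //; rewrite leq_addr /= expnS mul2n -addnn.
      by rewrite ltn_add2l.
    rewrite /thb /b hlog addKn.
    by case: (hpm m k) => ->; case: eqP => // h; move: h; lra.
  apply: funext => t; rewrite /Phi /Lim -eqth.
  by apply: cvg_lim => //; exact: unif_pt.
- move=> [b _ <-]; exists (thb b); split.
    by move=> m k; rewrite /thb; case: ifP => _; [left|right].
  split; first exact: (Lim_unif _ (thb_bound b)).
  by apply: continuous_subspaceT; exact: (Lim_cont _ (thb_bound b)).
Qed.

End S.

Theorem corollary2p5 (R : realType) :
  compact (FS_set : set {uniform` `[(0 : R), 1]%classic -> R}).
Proof.
rewrite FS_image; apply: continuous_compact; last exact: cantor_space_compact.
by apply: continuous_subspaceT; exact: Phi_cont.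
Qed.
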